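(* Let $b,c\in Z^{10}$ with $\sum_i b_i=\sum_i c_i=0$, and assume $t\nmid B_i$ and $t\nmid C_i$ for all odd $i$. Let $l$ be odd such that $t\mid B_l+B_{l+2}$, $t\mid B_{l+2}+B_{l+4}$, $t\nmid B_i+B_{i+2}$ for all odd $i\notin\{l,l+2\}$, and likewise $t\mid C_l+C_{l+2}$, $t\mid C_{l+2}+C_{l+4}$, $t\nmid C_i+C_{i+2}$ for all odd $i\notin\{l,l+2\}$ (indices mod $10$). Then $\mathbb{M}(b)$ and $\mathbb{M}(c)$ are isomorphic $B_{5,10}$-modules.
   Context: Let $Z=\mathbb{C}[[t]]$. Let $\Gamma_{10}$ be the quiver with vertices $0,1,\dots,9$ (indices taken mod $10$) on a cycle and arrows $x_i\colon i-1\to i$, $y_i\colon i\to i-1$ for $i=1,\dots,10$. Let $B_{5,10}$ be the completed path algebra of $\Gamma_{10}$ modulo the closed ideal generated by $xy=yx$ and $x^5=y^5$ at every vertex. For $b=(b_1,\dots,b_{10})\in Z^{10}$ with $\sum_i b_i=0$, the $B_{5,10}$-module $\mathbb{M}(b)$ has $V_i=Z\oplus Z$ at every vertex, and for odd $j$: $x_j=\begin{pmatrix} t& b_j\\ 0&1\end{pmatrix}$, $y_j=\begin{pmatrix} 1&-b_j\\0&t\end{pmatrix}$; for even $j$: $x_j=\begin{pmatrix}1&b_j\\0&t\end{pmatrix}$, $y_j=\begin{pmatrix}t&-b_j\\0&1\end{pmatrix}$. An isomorphism $\mathbb{M}(b)\to\mathbb{M}(c)$ is a family of invertible $Z$-linear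 maps $\varphi_i\colon Z^2\to Z^2$ commuting with all $x_i$ and $y_i$. For odd $i$ write $B_i=b_i+b_{i+1}$ and $C_i=c_i+c_{i+1}$ (indices mod $10$). *)

(* Defs.v *)
From HB Require Import structures.
From mathcomp Require Import all_boot all_order all_algebra.
From mathcomp Require Import boolp.
From mathcomp Require Import complex.
From mathcomp Require Import Rstruct.
Set Implicit Arguments. Unset Strict Implicit. Unset Printing Implicit Defensive.
Import Order.TTheory GRing.Theory Num.Theory.
Local Open Scope ring_scope.

Record fps (K : Type) := FPS { coeff : nat -> K }.
Arguments FPS {K} _.
Arguments coeff {K} _ _.

Lemma fps_ext (K : Type) (f g : fps K) : coeff f =1 coeff g -> f = g.
Proof. by case: f; case: g => g f /funext /= ->. Qed.

HB.instance Definition _ (K : Type) := gen_eqMixin (fps K).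
HB.instance Definition _ (K : Type) := gen_choiceMixin (fps K).

Section FPSRing.
Variable K : comNzRingType.

Definition fps0 : fps K := FPS (fun _ => 0).
Definition fpsD (f g : fps K) : fps K := FPS (fun n => coeff f n + coeff g n).
Definition fpsN (f : fps K) : fps K := FPS (fun n => - coeff f n).
Definition fps1 : fps K := FPS (fun n => (n == 0%N)%:R).
Definition fpsM (f g : fps K) : fps K :=
  FPS (fun n => \sum_(i < n.+1) coeff f i * coeff g (n - i)%N).

Lemma fpsDA : associative fpsD.
Proof. by move=> f g h; apply: fps_ext => n /=; rewrite addrA. Qed.
Lemma fpsDC : commutative fpsD.
Proof. by move=> f g; apply: fps_ext => n /=; rewrite addrC. Qed.
Lemma fps0D : left_id fps0 fpsD.
Proof. by move=> f; apply: fps_ext => n /=; rewrite add0r. Qed.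
Lemma fpsND : left_inverse fps0 fpsN fpsD.
Proof. by move=> f; apply: fps_ext => n /=; rewrite addNr. Qed.

HB.instance Definition _ := GRing.isZmodule.Build (fps K) fpsDA fpsDC fps0D fpsND.

Definition trunc (n : nat) (f : fps K) : {poly K} := \poly_(i < n.+1) coeff f i.

Lemma fpsM_poly n (f g : fps K) (P Q : {poly K}) :
  (forall i, (i <= n)%N -> P`_i = coeff f i) ->
  (forall i, (i <= n)%N -> Q`_i = coeff g i) ->
  coeff (fpsM f g) n = (P * Q)`_n.
Proof.
move=> hP hQ; rewrite coefM /=; apply: eq_bigr => i _.
by rewrite hP ?hQ ?leq_subr // -ltnS.
Qed.

Lemma truncE n (f : fps K) i : (i <= n)%N -> (trunc n f)`_i = coeff f i.
Proof. by move=> hi; rewrite coef_poly ltnS hi. Qed.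

Lemma fpsM_trunc n (f g : fps K) i : (i <= n)%N ->
  (trunc n f * trunc n g)`_i = coeff (fpsM f g) i.
Proof.
move=> hi; symmetry; apply: fpsM_poly => j hj; apply: truncE;
  exact: leq_trans hj hi.
Qed.

Lemma fpsMA : associative fpsM.
Proof.
move=> f g h; apply: fps_ext => n.
rewrite (@fpsM_poly n f (fpsM g h) (trunc n f) (trunc n g * trunc n h));
  last 2 first.
- by move=> i hi; rewrite truncE.
- by move=> i hi; rewrite fpsM_trunc.
rewrite (@fpsM_poly n (fpsM f g) h (trunc n f * trunc n g) (trunc n h)).
- by rewrite mulrA.
- by move=> i hi; rewrite fpsM_trunc.
- by move=> i hi; rewrite truncE.
Qed.

Lemma fpsMC : commutative fpsM.
Proof.
move=> f g; apply: fps_ext => n.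
by rewrite -(@fpsM_trunc n) // -[RHS](@fpsM_trunc n) // mulrC.
Qed.

Lemma fps1M : left_id fps1 fpsM.
Proof.
move=> f; apply: fps_ext => n.
rewrite (@fpsM_poly n fps1 f 1 (trunc n f)).
- by rewrite mul1r truncE.
- by move=> i _; rewrite coef1.
- by move=> i hi; rewrite truncE.
Qed.

Lemma fpsMDl : left_distributive fpsM fpsD.
Proof.
move=> f g h; apply: fps_ext => n /=.
by rewrite -big_split /=; apply: eq_bigr => i _; rewrite mulrDl.
Qed.

Lemma fps1_neq0 : fps1 != fps0.
Proof.
apply/eqP => /(congr1 (fun f => coeff f 0%N)) /= /eqP.
by rewrite oner_eq0.
Qed.

HB.instance Definition _ :=
  GRing.Zmodule_isComNzRing.Build (fps K) fpsMA fpsMC fps1M fpsMDl fps1_neq0.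

Definition fps_t : fps K := FPS (fun n => (n == 1%N)%:R).

End FPSRing.

Definition CC : Type := (Rdefinitions.R)[i].
Definition Z : comNzRingType := fps CC.
Definition t : Z := fps_t CC.

Definition dvdZ (a f : Z) : Prop := exists g : Z, f = a * g.

(* indices (of arrows / vertices / entries of b) taken mod 10;
   the index j in {1,...,10} is represented by j mod 10 in 'I_10,
   so that vertex 10 = vertex 0 and b_10 = b 0; parity is preserved. *)
Definition idx (k : nat) : 'I_10 := inord (k %% 10).

Definition mx2 (a b c d : Z) : 'M[Z]_2 :=
  \matrix_(r < 2, s < 2)
    if r == 0 then (if s == 0 then a else b) else (if s == 0 then c else d).

(* The matrices of the arrows x_j : j-1 -> j and y_j : j -> j-1 of M(b),
   acting on column vectors of V_i = Z (+) Z. *)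
Definition xmat (b : 'I_10 -> Z) (j : 'I_10) : 'M[Z]_2 :=
  if odd j then mx2 (t) (b j) (0) (1)
  else mx2 (1) (b j) (0) (t).

Definition ymat (b : 'I_10 -> Z) (j : 'I_10) : 'M[Z]_2 :=
  if odd j then mx2 (1) (- b j) (0) (t)
  else mx2 (t) (- b j) (0) (1).

(* An isomorphism M(b) -> M(c): invertible Z-linear maps phi_i : Z^2 -> Z^2
   (i.e. invertible 2x2 matrices over Z), one per vertex, commuting with
   all x_j : j-1 -> j and y_j : j -> j-1. *)
Definition invertible_mx (A : 'M[Z]_2) : Prop :=
  exists B : 'M[Z]_2, A *m B = 1%:M /\ B *m A = 1%:M.

Definition Miso (b c : 'I_10 -> Z) : Prop :=
  exists phi : 'I_10 -> 'M[Z]_2,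
    (forall i, invertible_mx (phi i)) /\
    (forall j : 'I_10,
       phi j *m xmat b j = xmat c j *m phi (idx (j + 9))) /\
    (forall j : 'I_10,
       phi (idx (j + 9)) *m ymat b j = ymat c j *m phi j).

Definition Bsum (b : 'I_10 -> Z) (i : 'I_10) : Z := b i + b (idx (i + 1)).

(* Main.v *)
Require Import Defs.
From HB Require Import structures.
From mathcomp Require Import all_boot all_order all_algebra.
From mathcomp Require Import ring zify.
From mathcomp Require Import complex Rstruct.
Notation CR := (Rdefinitions.R)[i].
Set Implicit Arguments. Unset Strict Implicit. Unset Printing Implicit Defensive.
Import GRing.Theory.
Local Open Scope ring_scope.

Definition c0 (f : Z) : CR := coeff f 0.
Lemma c0D f g : c0 (f + g) = c0 f + c0 g. Proof. by []. Qed.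
Lemma c0N f : c0 (- f) = - c0 f. Proof. by []. Qed.
Lemma c0B f g : c0 (f - g) = c0 f - c0 g. Proof. by []. Qed.
Lemma c0M f g : c0 (f * g) = c0 f * c0 g.
Proof. by rewrite /c0 /= big_ord1. Qed.
Lemma c0t : c0 t = 0. Proof. by []. Qed.
Lemma c00 : c0 0 = 0. Proof. by []. Qed.

Definition cst (a : CR) : Z := FPS (fun n => if n == 0%N then a else 0).
Lemma c0cst a : c0 (cst a) = a. Proof. by []. Qed.
Definition shift (f : Z) : Z := FPS (fun n => coeff f n.+1).

Lemma coeffM (f g : Z) n : coeff (f * g) n = \sum_(i < n.+1) coeff f i * coeff g (n - i)%N.
Proof. by []. Qed.
Lemma coeff_t n : coeff t n = (n == 1%N)%:R. Proof. by []. Qed.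
Lemma coeff_tM (f : Z) n : coeff (t * f) n.+1 = coeff f n.
Proof.
rewrite coeffM big_ord_recl coeff_t mul0r add0r big_ord_recl coeff_t mul1r.
rewrite big1 ?addr0.
  by rewrite /bump /= subn1.
move=> i _; rewrite coeff_t.
have -> : (bump 0 (bump 0 i) == 1%N) = false by [].
by rewrite mul0r.
Qed.
Lemma t_shift (f : Z) : c0 f = 0 -> t * shift f = f.
Proof.
move=> h; apply: fps_ext => -[|n]; last by rewrite coeff_tM.
timeout 10 (have := c0M t (shift f)).
timeout 10 (rewrite c0t mul0r /c0 => ->).
timeout 10 (by rewrite -h).
Qed.

Lemma t_cancel (f g : Z) : t * f = t * g -> f = g.
Proof. timeout 10 (by move=> h; apply: fps_ext => n; rewrite -(coeff_tM f) -(coeff_tM g) h). Qed.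

Lemma shift0 : shift 0 = 0. Proof. timeout 10 (by apply: fps_ext). Qed.
Lemma cstM a b : cst a * cst b = cst (a * b).
Proof.
apply: fps_ext => -[|n]; rewrite coeffM.
  by rewrite big_ord1.
rewrite big1 // => i _; case: (nat_of_ord i) => [|k].
  by rewrite subn0 /cst /= mulr0.
by rewrite /cst /= mul0r.
Qed.

Lemma cst1 : cst 1 = 1. Proof. by apply: fps_ext => -[|n]. Qed.

Lemma c0_sum n (F : nat -> Z) : c0 (\sum_(i < n) F i) = \sum_(i < n) c0 (F i).
Proof.
elim: n => [|n IH]; first by rewrite !big_ord0.
by rewrite !big_ord_recr c0D IH.
Qed.

Lemma mx2_mul a b c d a' b' c' d' :
  mx2 a b c d *m mx2 a' b' c' d' =
  mx2 (a * a' + b * c') (a * b' + b * d') (c * a' + d * c') (c * b' + d * d').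
Proof.
apply/matrixP => i j; rewrite !mxE !big_ord_recl big_ord0 !mxE.
by case: i => [[|[|//]] Hi]; case: j => [[|[|//]] Hj]; rewrite addr0.
Qed.
Lemma mx2_det a b c d : \det (mx2 a b c d) = a * d - b * c.
Proof.
rewrite (expand_det_row _ ord0) !big_ord_recl big_ord0 /cofactor !det_mx11 !mxE /=.
rewrite !expr0 !expr1.
ring.
Qed.
Lemma mx2_congr a b c d a' b' c' d' :
  a = a' -> b = b' -> c = c' -> d = d' -> mx2 a b c d = mx2 a' b' c' d'.
Proof. by move=> -> -> -> ->. Qed.

Lemma xo p q s p1 q1 s1 r b c :
  p1 = p + c * r -> s1 = s - b * r -> q1 = t * q + c * s - b * p - b * c * r ->
  mx2 p1 q1 r s1 *m mx2 t b 0 1 = mx2 t c 0 1 *m mx2 p q (t * r) s.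
Proof. move=> -> -> ->; rewrite !mx2_mul; apply: mx2_congr; ring. Qed.

Lemma yo p q s p1 q1 s1 r b c :
  p1 = p + c * r -> s1 = s - b * r -> q1 = t * q + c * s - b * p - b * c * r ->
  mx2 p q (t * r) s *m mx2 1 (- b) 0 t = mx2 1 (- c) 0 t *m mx2 p1 q1 r s1.
Proof. move=> -> -> ->; rewrite !mx2_mul; apply: mx2_congr; ring. Qed.

Lemma xe p1 q1 s1 p q s r b c :
  p = p1 + c * r -> s = s1 - b * r -> q1 = t * q - c * s1 + p * b ->
  mx2 p q (t * r) s *m mx2 1 b 0 t = mx2 1 c 0 t *m mx2 p1 q1 r s1.
Proof. move=> -> -> ->; rewrite !mx2_mul; apply: mx2_congr; ring. Qed.

Lemma ye p1 q1 s1 p q s r b c :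
  p = p1 + c * r -> s = s1 - b * r -> q1 = t * q - c * s1 + p * b ->
  mx2 p1 q1 r s1 *m mx2 t (- b) 0 1 = mx2 t (- c) 0 1 *m mx2 p q (t * r) s.
Proof. move=> -> -> ->; rewrite !mx2_mul; apply: mx2_congr; ring. Qed.
Section Construction.
Variables (bb cc : nat -> Z) (pi sg rh : CR).

Definition ostep k (x : Z * Z * Z) : Z * Z * Z :=
  let: (p, q, s) := x in
  (p + cc k * cst rh, t * q + cc k * s - bb k * p - bb k * cc k * cst rh,
   s - bb k * cst rh).
Definition estep k (x : Z * Z * Z) : Z * Z * Z :=
  let: (p, q, s) := x in
  (p + cc k * cst rh, shift (q + cc k * s - (p + cc k * cst rh) * bb k),
   s - bb k * cst rh).
Fixpoint st k : Z * Z * Z :=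
  match k with
  | 0 => (cst pi, 0, cst sg)
  | k'.+1 => if odd k'.+1 then ostep k'.+1 (st k') else estep k'.+1 (st k')
  end.
Arguments st k : simpl never.
Definition Mat k : 'M[Z]_2 :=
  let: (p, q, s) := st k in mx2 p q (if odd k then cst rh else t * cst rh) s.

Definition SB k := \sum_(i < k) bb i.+1.
Definition SC k := \sum_(i < k) cc i.+1.
Definition V k := cst sg * SC k - cst pi * SB k - cst rh * SB k * SC k.

Lemma SB_S k : SB k.+1 = SB k + bb k.+1. Proof. by rewrite /SB big_ord_recr. Qed.
Lemma SC_S k : SC k.+1 = SC k + cc k.+1. Proof. by rewrite /SC big_ord_recr. Qed.

Lemma st_odd k : odd k.+1 -> st k.+1 = ostep k.+1 (st k).
Proof. by move=> h; rewrite -[st k.+1]/(if odd k.+1 then _ else _) h. Qed.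
Lemma st_even k : ~~ odd k.+1 -> st k.+1 = estep k.+1 (st k).
Proof. by move=> h; rewrite -[st k.+1]/(if odd k.+1 then _ else _) (negbTE h). Qed.

Lemma st_ps k : (st k).1.1 = cst pi + cst rh * SC k /\ (st k).2 = cst sg - cst rh * SB k.
Proof.
elim: k => [|k [IHp IHs]].
  by rewrite /SB /SC !big_ord0 /=; split; ring.
rewrite SB_S SC_S.
case: (boolP (odd k.+1)) => h; [rewrite st_odd // | rewrite st_even //];
  move: IHp IHs; case: (st k) => [[p q] s] /= -> ->; split; ring.
Qed.

Lemma X_eq k : ~~ odd k ->
  let: (p1, q1, s1) := st k.+1 in
  q1 + cc k.+2 * s1 - (p1 + cc k.+2 * cst rh) * bb k.+2
  = t * (st k).1.2 + (V k.+2 - V k).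
Proof.
move=> hk; rewrite st_odd //; have [] := st_ps k.
case: (st k) => [[p q] s] /= -> ->.
rewrite /V !SB_S !SC_S; ring.
Qed.

Lemma c0tM f : c0 (t * f) = 0. Proof. by rewrite c0M c0t mul0r. Qed.

Hypothesis hsB : SB 10 = 0.
Hypothesis hsC : SC 10 = 0.
Hypothesis hW : forall i, (i <= 5)%N -> c0 (V (2 * i)) = 0.
Hypothesis hdet : pi * sg != 0.

Lemma st_q_even j : (j <= 5)%N -> t * (st (2 * j)).1.2 = V (2 * j).
Proof.
elim: j => [|j IH] hj.
  by rewrite muln0 /V /SB /SC !big_ord0 /=; ring.
have -> : (2 * j.+1 = (2 * j).+2)%N by rewrite mulnS.
have he : ~~ odd (2 * j) by rewrite oddM.
have := X_eq he.
rewrite (@st_even (2 * j).+1); last by rewrite /= !negbK.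
case: (st (2 * j).+1) => [[p1 q1] s1] /= hX.
rewrite /estep; cbv beta iota delta [fst snd].
rewrite t_shift.
  by apply: (etrans hX); rewrite IH ?(ltnW hj) //; ring.
have hc := congr1 c0 hX.
apply: (etrans hc).
have e2 : (2 * j).+2 = (2 * j.+1)%N by rewrite mulnS.
rewrite c0D c0B c0tM (hW (ltnW hj)) e2 (hW hj).
by rewrite subr0 addr0.
Qed.

Lemma hW' k : ~~ odd k -> (k <= 10)%N -> c0 (V k) = 0.
Proof.
move=> hk hk10; have := odd_double_half k; rewrite (negbTE hk) add0n => e.
rewrite -e -mul2n; apply: hW; rewrite -e in hk10.
by move: hk10; rewrite -mul2n; lia.
Qed.

Definition XB (f : nat -> Z) k :=
  if odd k then mx2 t (f k) 0 1 else mx2 1 (f k) 0 t.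
Definition YB (f : nat -> Z) k :=
  if odd k then mx2 1 (- f k) 0 t else mx2 t (- f k) 0 1.

Lemma xyeq k : (k < 10)%N ->
  Mat k.+1 *m XB bb k.+1 = XB cc k.+1 *m Mat k /\ Mat k *m YB bb k.+1 = YB cc k.+1 *m Mat k.+1.
Proof.
move=> hk; case: (boolP (odd k)) => hko.
  case: k hk hko => [//|k] hk hko.
  have hke : ~~ odd k by move: hko => /= ->.
  have hX := X_eq hke.
  have o1 : odd k.+1 = true by [].
  have o2 : odd k.+2 = false by rewrite -[odd k.+2]/(~~ odd k.+1) o1.
  rewrite /Mat /XB /YB (@st_even k.+1); last by rewrite o2.
  rewrite o1 o2.
  case: (st k.+1) hX => [[p1 q1] s1] hX.
  rewrite /estep; cbv beta iota in hX |- *.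
  set X := (q1 + _ - _).
  have hq : t * shift X = X.
    apply: t_shift; have hc := congr1 c0 hX.
    have h1 : c0 (V k) = 0 by apply: hW' hke _; lia.
    have h2 : c0 (V k.+2) = 0 by apply: hW'; [rewrite o2 | lia].
    by apply: (etrans hc); rewrite c0D c0B c0tM h1 h2 subr0 add0r.
  have e : q1 = t * shift X - cc k.+2 * s1 + (p1 + cc k.+2 * cst rh) * bb k.+2.
    by rewrite hq /X; ring.
  by split; [apply: xe | apply: ye].
have o1 : odd k.+1 = true by rewrite -[odd k.+1]/(~~ odd k) hko.
rewrite /Mat /XB /YB (@st_odd k); last by rewrite o1.
rewrite o1 (negbTE hko).
case: (st k) => [[p q] s]; rewrite /ostep; cbv beta iota.
by split; [apply: xo | apply: yo].
Qed.

Lemma X_eq' k : ~~ odd k ->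
  (st k.+1).1.2 + cc k.+2 * (st k.+1).2 - ((st k.+1).1.1 + cc k.+2 * cst rh) * bb k.+2
  = t * (st k).1.2 + (V k.+2 - V k).
Proof. by move=> hk; have := X_eq hk; case: (st k.+1) => [[p1 q1] s1]. Qed.

Lemma est_q k : ~~ odd k.+1 -> (st k.+1).1.2 =
  shift ((st k).1.2 + cc k.+1 * (st k).2 - ((st k).1.1 + cc k.+1 * cst rh) * bb k.+1).
Proof. by move=> h; rewrite st_even //; case: (st k) => [[p q] s]. Qed.

Lemma V10 : V 10 = 0.
Proof. by rewrite /V hsB hsC; ring. Qed.

Lemma st10 : st 10 = st 0.
Proof.
have h8 : t * (st 8).1.2 = V 8 := @st_q_even 4 isT.
have hq : (st 10).1.2 = 0.
  rewrite est_q //.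
  transitivity (shift 0); last exact: shift0.
  congr shift; apply: (etrans (@X_eq' 8 isT)); rewrite h8 V10; ring.
have [hp hs] := st_ps 10.
move: hp hs hq; case: (st 10) => [[p q] s] /= -> -> ->.
by rewrite hsB hsC !mulr0 addr0 subr0.
Qed.

Lemma Mat10 : Mat 10 = Mat 0.
Proof. by rewrite /Mat st10. Qed.

Lemma XB_det f k : \det (XB f k) = t.
Proof. by rewrite /XB; case: (odd k); rewrite mx2_det; ring. Qed.

Lemma Mat_det k : (k <= 10)%N -> \det (Mat k) = cst (pi * sg).
Proof.
elim: k => [|k IH] hk.
  rewrite /Mat -[st 0]/(cst pi, 0, cst sg) mx2_det -cstM; ring.
have [hx _] := xyeq hk.
have := congr1 (@determinant _ _) hx.
rewrite !det_mulmx !XB_det IH ?(ltnW hk) // => h.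
apply: t_cancel; by rewrite mulrC h.
Qed.

Lemma Mat_inv k : (k <= 10)%N -> invertible_mx (Mat k).
Proof.
move=> hk; exists (cst (pi * sg)^-1 *: \adj (Mat k)).
split.
  by rewrite -scalemxAr mul_mx_adj Mat_det // scale_scalar_mx cstM mulVf // cst1.
by rewrite -scalemxAl mul_adj_mx Mat_det // scale_scalar_mx cstM mulVf // cst1.
Qed.
End Construction.
Lemma c0_sum' n (F : 'I_n -> Z) : c0 (\sum_(i < n) F i) = \sum_(i < n) c0 (F i).
Proof. exact: (big_morph c0 c0D c00). Qed.
Lemma W_ok (be ga : nat -> CR) :
  be 4 = - (be 1 + be 2 + be 3) -> be 6 = be 1 + be 2 - be 5 ->
  be 8 = - (be 1 + be 2 + be 7 + be 9 + be 10) ->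
  ga 4 = - (ga 1 + ga 2 + ga 3) -> ga 6 = ga 1 + ga 2 - ga 5 ->
  ga 8 = - (ga 1 + ga 2 + ga 7 + ga 9 + ga 10) ->
  forall i, (i <= 5)%N ->
  let a := be 1 + be 2 in let y := be 9 + be 10 in
  let e := ga 1 + ga 2 in let y' := ga 9 + ga 10 in
  (a * y * (e + y')) * (\sum_(j < 2 * i) ga j.+1)
  - (e * y' * (a + y)) * (\sum_(j < 2 * i) be j.+1)
  - (e * y - a * y') * (\sum_(j < 2 * i) be j.+1) * (\sum_(j < 2 * i) ga j.+1) = 0.
Proof.
move=> b4 b6 b8 g4 g6 g8 i hi a y e y'; rewrite /a /y /e /y'.
case: i hi => [|[|[|[|[|[|//]]]]]] _.
  rewrite !big_ord0; ring.
all: rewrite !big_ord_recr !big_ord0 /= ?b4 ?b6 ?b8 ?g4 ?g6 ?g8; ring.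
Qed.
Lemma idx_val k : nat_of_ord (idx k) = (k %% 10)%N.
Proof. by rewrite /idx inordK // ltn_pmod. Qed.

Lemma idx_addl a k : idx (idx a + k) = idx (a + k).
Proof. apply: val_inj => /=; rewrite !idx_val; lia. Qed.

Lemma BsumE (f : 'I_10 -> Z) m a :
  Bsum f (idx (m + a)) = f (idx (m + a)) + f (idx (m + a.+1)).
Proof. by rewrite /Bsum idx_addl addn1 addnS. Qed.

Lemma dvd_c0 f : dvdZ t f -> c0 f = 0.
Proof. by case=> g ->; rewrite c0tM. Qed.

Lemma ndvd_c0 f : ~ dvdZ t f -> c0 f != 0.
Proof. move=> H; apply/eqP => h; apply: H; exists (shift f); by rewrite t_shift. Qed.

Lemma xmat_idx (f : 'I_10 -> Z) m k : ~~ odd m ->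
  xmat f (idx (m + k)) = XB (fun k => f (idx (m + k))) k.
Proof. by move=> hm; rewrite /xmat /XB idx_val odd_mod // oddD (negbTE hm). Qed.

Lemma ymat_idx (f : 'I_10 -> Z) m k : ~~ odd m ->
  ymat f (idx (m + k)) = YB (fun k => f (idx (m + k))) k.
Proof. by move=> hm; rewrite /ymat /YB idx_val odd_mod // oddD (negbTE hm). Qed.

Lemma lin (x y s : CR) : s = 0 -> x - y = s -> x = y.
Proof. by move=> hs h; apply/eqP; rewrite -subr_eq0 h hs. Qed.

Lemma sum10 (f : nat -> CR) : \sum_(i < 10) f i.+1 =
  f 1%N + f 2%N + f 3%N + f 4%N + f 5%N + f 6%N + f 7%N + f 8%N + f 9%N + f 10%N.
Proof. by rewrite !big_ord_recr big_ord0 /= add0r. Qed.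
Theorem theorem2p7 (b c : 'I_10 -> Z) (l : 'I_10) :
  \sum_(i < 10) b i = 0 ->
  \sum_(i < 10) c i = 0 ->
  (forall i : 'I_10, odd i -> ~ dvdZ t (Bsum b i)) ->
  (forall i : 'I_10, odd i -> ~ dvdZ t (Bsum c i)) ->
  odd l ->
  dvdZ t (Bsum b l + Bsum b (idx (l + 2))) ->
  dvdZ t (Bsum b (idx (l + 2)) + Bsum b (idx (l + 4))) ->
  (forall i : 'I_10, odd i -> i != l -> i != idx (l + 2) ->
     ~ dvdZ t (Bsum b i + Bsum b (idx (i + 2)))) ->
  dvdZ t (Bsum c l + Bsum c (idx (l + 2))) ->
  dvdZ t (Bsum c (idx (l + 2)) + Bsum c (idx (l + 4))) ->
  (forall i : 'I_10, odd i -> i != l -> i != idx (l + 2) ->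
     ~ dvdZ t (Bsum c i + Bsum c (idx (i + 2)))) ->
  Miso b c.
Proof.
move=> sb sc nb nc hlo db1 db2 _ dc1 dc2 _.
have hl0 : (0 < l)%N by move: hlo; case: (nat_of_ord l).
pose m := l.-1.
have hml : (m + 1)%N = l by rewrite addn1 prednK.
have hm : (m < 10)%N by rewrite /m; move: (ltn_ord l); lia.
have hme : ~~ odd m by move: hlo; rewrite -hml addn1.
have hl : l = idx (m + 1) by apply: val_inj => /=; rewrite idx_val hml modn_small.
have hl2 : idx (l + 2) = idx (m + 3) by rewrite hl idx_addl -addnA.
have hl4 : idx (l + 4) = idx (m + 5) by rewrite hl idx_addl -addnA.
have hl6 : idx (l + 6) = idx (m + 7) by rewrite hl idx_addl -addnA.
have hl8 : idx (l + 8) = idx (m + 9) by rewrite hl idx_addl -addnA.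
have oddl k : odd (idx (l + k.*2)).
  by rewrite idx_val odd_mod // oddD odd_double addbF.
pose bb k := b (idx (m + k)).
pose cc k := c (idx (m + k)).
have hinj : injective (fun i : 'I_10 => idx (m + i.+1)).
  move=> x y /(congr1 (@nat_of_ord 10)); rewrite !idx_val => h.
  apply: ord_inj; move: (ltn_ord x) (ltn_ord y) h; lia.
have hsB : SB bb 10 = 0.
  rewrite /SB; transitivity (\sum_(i<10) b i); last exact: sb.
  symmetry; exact: (reindex_inj hinj).
have hsC : SC cc 10 = 0.
  rewrite /SC; transitivity (\sum_(i<10) c i); last exact: sc.
  symmetry; exact: (reindex_inj hinj).
pose be k := c0 (bb k).
pose ga k := c0 (cc k).
have tb : be 1%N + be 2%N + be 3%N + be 4%N + be 5%N + be 6%N + be 7%N + be 8%N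
   + be 9%N + be 10%N = 0.
  by have := congr1 c0 hsB; rewrite /SB c0_sum' => h; rewrite -sum10; exact: h.
have tc : ga 1%N + ga 2%N + ga 3%N + ga 4%N + ga 5%N + ga 6%N + ga 7%N + ga 8%N
   + ga 9%N + ga 10%N = 0.
  by have := congr1 c0 hsC; rewrite /SC c0_sum' => h; rewrite -sum10; exact: h.
have d1b : be 1%N + be 2%N + (be 3%N + be 4%N) = 0.
  by move: db1; rewrite hl2 {1}hl !BsumE => /dvd_c0; rewrite !c0D.
have d2b : be 3%N + be 4%N + (be 5%N + be 6%N) = 0.
  by move: db2; rewrite hl2 hl4 !BsumE => /dvd_c0; rewrite !c0D.
have d1c : ga 1%N + ga 2%N + (ga 3%N + ga 4%N) = 0.
  by move: dc1; rewrite hl2 {1}hl !BsumE => /dvd_c0; rewrite !c0D.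
have d2c : ga 3%N + ga 4%N + (ga 5%N + ga 6%N) = 0.
  by move: dc2; rewrite hl2 hl4 !BsumE => /dvd_c0; rewrite !c0D.
have n1b : be 1%N + be 2%N != 0.
  by have := ndvd_c0 (nb l hlo); rewrite hl BsumE c0D.
have n7b : be 7%N + be 8%N != 0.
  by have := ndvd_c0 (nb _ (oddl 3%N)); rewrite hl6 BsumE c0D.
have n9b : be 9%N + be 10%N != 0.
  by have := ndvd_c0 (nb _ (oddl 4%N)); rewrite hl8 BsumE c0D.
have n1c : ga 1%N + ga 2%N != 0.
  by have := ndvd_c0 (nc l hlo); rewrite hl BsumE c0D.
have n7c : ga 7%N + ga 8%N != 0.
  by have := ndvd_c0 (nc _ (oddl 3%N)); rewrite hl6 BsumE c0D.
have n9c : ga 9%N + ga 10%N != 0.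
  by have := ndvd_c0 (nc _ (oddl 4%N)); rewrite hl8 BsumE c0D.
have b4 : be 4%N = - (be 1%N + be 2%N + be 3%N).
  by apply: (lin d1b); ring.
have b6 : be 6%N = be 1%N + be 2%N - be 5%N.
  by apply: (lin (s := (be 3%N + be 4%N + (be 5%N + be 6%N)) - (be 1%N + be 2%N + (be 3%N + be 4%N))));
    [rewrite d1b d2b subr0 | ring].
have b8 : be 8%N = - (be 1%N + be 2%N + be 7%N + be 9%N + be 10%N).
  by apply: (lin (s := (be 1%N + be 2%N + be 3%N + be 4%N + be 5%N + be 6%N + be 7%N + be 8%N
   + be 9%N + be 10%N) - (be 3%N + be 4%N + (be 5%N + be 6%N))));
    [rewrite tb d2b subr0 | ring].
have g4 : ga 4%N = - (ga 1%N + ga 2%N + ga 3%N).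
  by apply: (lin d1c); ring.
have g6 : ga 6%N = ga 1%N + ga 2%N - ga 5%N.
  by apply: (lin (s := (ga 3%N + ga 4%N + (ga 5%N + ga 6%N)) - (ga 1%N + ga 2%N + (ga 3%N + ga 4%N))));
    [rewrite d1c d2c subr0 | ring].
have g8 : ga 8%N = - (ga 1%N + ga 2%N + ga 7%N + ga 9%N + ga 10%N).
  by apply: (lin (s := (ga 1%N + ga 2%N + ga 3%N + ga 4%N + ga 5%N + ga 6%N + ga 7%N + ga 8%N
   + ga 9%N + ga 10%N) - (ga 3%N + ga 4%N + (ga 5%N + ga 6%N))));
    [rewrite tc d2c subr0 | ring].
have ayb : be 1%N + be 2%N + (be 9%N + be 10%N) = - (be 7%N + be 8%N).
  by apply: (lin (s := 0)) => //; rewrite b8; ring.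
have ayc : ga 1%N + ga 2%N + (ga 9%N + ga 10%N) = - (ga 7%N + ga 8%N).
  by apply: (lin (s := 0)) => //; rewrite g8; ring.
pose pi := (ga 1%N + ga 2%N) * (ga 9%N + ga 10%N) * (be 1%N + be 2%N + (be 9%N + be 10%N)).
pose sg := (be 1%N + be 2%N) * (be 9%N + be 10%N) * (ga 1%N + ga 2%N + (ga 9%N + ga 10%N)).
pose rh := (ga 1%N + ga 2%N) * (be 9%N + be 10%N) - (be 1%N + be 2%N) * (ga 9%N + ga 10%N).
have hdet : pi * sg != 0.
  by rewrite /pi /sg ayb ayc !mulf_neq0 // oppr_eq0.
have hW : forall i, (i <= 5)%N -> c0 (V bb cc pi sg rh (2 * i)) = 0.
  move=> i hi; rewrite /V !c0B !c0M !c0cst /SB /SC !c0_sum'.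
  exact: (W_ok b4 b6 b8 g4 g6 g8 hi).
pose phi := fun v : 'I_10 => Mat bb cc pi sg rh ((v + 9 - m) %% 10).+1.
exists phi; split.
  move=> i; apply: (Mat_inv hW hdet); exact: ltn_pmod.
have key j : let x := ((nat_of_ord j + 9 - m) %% 10)%N in
  [/\ (x < 10)%N, j = idx (m + x.+1) & phi (idx (j + 9)) = Mat bb cc pi sg rh x].
  move=> x; have hx : (x < 10)%N by exact: ltn_pmod.
  split => //.
    by apply: ord_inj; rewrite idx_val /x; move: (ltn_ord j); lia.
  rewrite /phi idx_val.
  have [x0|xn0] := eqVneq x 0%N.
    rewrite x0 -(Mat10 hsB hsC hW); congr Mat.
    by move: x0; rewrite /x; move: (ltn_ord j); lia.
  by congr Mat; move: xn0; rewrite /x; move: (ltn_ord j); lia.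
split=> j; have [hx hj hp] := key j; rewrite hp.
  have -> : phi j = Mat bb cc pi sg rh ((nat_of_ord j + 9 - m) %% 10).+1 by [].
  have ex f : xmat f j = XB (fun k => f (idx (m + k))) ((nat_of_ord j + 9 - m) %% 10).+1.
    by rewrite [in LHS]hj xmat_idx.
  rewrite !ex; exact: (xyeq hW hdet hx).1.
have -> : phi j = Mat bb cc pi sg rh ((nat_of_ord j + 9 - m) %% 10).+1 by [].
have ey f : ymat f j = YB (fun k => f (idx (m + k))) ((nat_of_ord j + 9 - m) %% 10).+1.
  by rewrite [in LHS]hj ymat_idx.
rewrite !ey; exact: (xyeq hW hdet hx).2.
Qed.
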